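(* Let $L$ be a torsion-free $d$-dimensional Lie algebra over $\mathbb{C}[\![t]\!]$ and $*\in\{\le,\triangleleft\}$. Assume $L$ has a basis $B=\{x_1,\ldots,x_d\}$ which is nice with respect to $*$ and simple. Then $$R_L^*(T)=\sum_{\mathbf{n}\in\mathcal{C}_B^*\cap\mathbb{Z}^d}T^{n_1+n_2+\cdots+n_d},$$ where $\mathcal{C}_B^{\triangleleft}=\{\mathbf{y}\in\mathbb{R}_{\ge0}^d: y_l\le y_i \text{ and } y_l\le y_j \text{ whenever } [x_i,x_j]=ax_l,\ a\ne0\}$ and $\mathcal{C}_B^{\le}=\{\mathbf{y}\in\mathbb{R}_{\ge0}^d: y_l\le y_i+y_j \text{ whenever } [x_i,x_j]=ax_l,\ a\ne0\}$.
   Context: Reduced zeta function: with $\chi$ the Euler characteristic on complex constructible sets (unique integer-valued function with $\chi(\mathbb{C}^m)=1$, additive on disjoint constructible sets, multiplicative along constructible maps with fibres of constant Euler characteristic), and $B_n^{\le}$ (resp. $B_n^{\triangleleft}$) the constructible subset of the Grassmannian $\mathrm{Gr}(L/t^nL)$ of $\mathbb{C}[\![t]\!]$-submodules of $L$ of $\mathbb{C}$-codimension $n$ that are subalgebras (resp. ideals), $R_L^*(T)=\sum_{n\ge0}\chi(B_n^* )T^n$. Let $v$ be the $t$-adic valuation on $\mathbb{C}[\![t]\!]$. Let $\mathcal{D}_B^*$ be the set of $\mathbf{n}\in\mathbb{Z}_{\ge0}^d$ such that the $\mathbb{C}[\![t]\!]$-span of $t^{n_1}x_1,\ldots,t^{n_d}x_d$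 is an ideal (if $*=\triangleleft$) or a subalgebra (if $*=\le$). The basis $B$ is nice with respect to $*$ if $R_L^*(T)=\sum_{\mathbf{n}\in\mathcal{D}_B^*}T^{n_1+\cdots+n_d}$. It is simple if for all $i,j$ there exist $l\in\{1,\ldots,d\}$ and $a\in\mathbb{C}[\![t]\!]$ with $[x_i,x_j]=ax_l$ and either $a=0$ or $v(a)=0$. *)

(* Defs.v *)
From HB Require Import structures.
From mathcomp Require Import all_boot all_order all_algebra.
From mathcomp Require Import complex.
From mathcomp Require Import boolp.
From mathcomp Require Import Rstruct.
Set Implicit Arguments. Unset Strict Implicit. Unset Printing Implicit Defensive.
Import Order.TTheory GRing.Theory Num.Theory.
Local Open Scope ring_scope.

Definition CC : Type := complex Rdefinitions.R.

(** Formal power series C[[t]] : coefficient sequences. *)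
Definition PS : Type := nat -> CC.

Definition ps0 : PS := fun _ => 0.
Definition ps1 : PS := fun m => if m == 0%N then 1 else 0.
Definition addps (f g : PS) : PS := fun m => f m + g m.
Definition oppps (f : PS) : PS := fun m => - f m.
Definition mulps (f g : PS) : PS :=
  fun m => \sum_(k < m.+1) f k * g (m - k)%N.
Definition tpow (n : nat) : PS := fun m => if m == n then 1 else 0.
(** v(a) = 0 for the t-adic valuation, i.e. a has nonzero constant term *)
Definition val_is_zero (a : PS) : Prop := a 0%N <> 0.

(** A free C[[t]]-Lie algebra of rank d with basis x_1..x_d is given by its
    structure constants: [x_i, x_j] = \sum_k c i j k x_k.
    Elements of L are coordinate vectors 'I_d -> PS. *)
Definition Lvec (d : nat) : Type := 'I_d -> PS.

Definition basis_vec (d : nat) (i : 'I_d) : Lvec d :=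
  fun k => if k == i then ps1 else ps0.

Definition br (d : nat) (c : 'I_d -> 'I_d -> 'I_d -> PS) (v w : Lvec d) : Lvec d :=
  fun l m => \sum_(i < d) \sum_(j < d) mulps (mulps (v i) (w j)) (c i j l) m.

(** Lie algebra axioms (alternating bilinear bracket + Jacobi identity),
    expressed on the basis (equivalent by (tri)linearity). *)
Definition is_lie (d : nat) (c : 'I_d -> 'I_d -> 'I_d -> PS) : Prop :=
  [/\ (forall i k, c i i k = ps0),
      (forall i j k, c i j k = oppps (c j i k)) &
      (forall i j k l,
         (fun m => \sum_(p < d)
             (mulps (c i j p) (c p k l) m + mulps (c j k p) (c p i l) m
              + mulps (c k i p) (c p j l) m)) = ps0)].

Definition bracket_is (d : nat) (c : 'I_d -> 'I_d -> 'I_d -> PS)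
  (i j l : 'I_d) (a : PS) : Prop :=
  forall k, c i j k = if k == l then a else ps0.

Definition simple_basis (d : nat) (c : 'I_d -> 'I_d -> 'I_d -> PS) : Prop :=
  forall i j, exists l, exists a, bracket_is c i j l a /\ (a = ps0 \/ val_is_zero a).

Inductive kind := Subalg | Ideal.

Definition in_span (d : nat) (n : 'I_d -> nat) (v : Lvec d) : Prop :=
  exists a : 'I_d -> PS, v = fun k => mulps (a k) (tpow (n k)).

Definition is_star (d : nat) (c : 'I_d -> 'I_d -> 'I_d -> PS) (star : kind)
  (n : 'I_d -> nat) : Prop :=
  match star with
  | Subalg => forall v w, in_span n v -> in_span n w -> in_span n (br c v w)
  | Ideal => forall v w, in_span n w -> in_span n (br c v w)
  end.

Definition D_B (d : nat) (c : 'I_d -> 'I_d -> 'I_d -> PS) (star : kind)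
  (n : 'I_d -> nat) : Prop := is_star c star n.

(** Coefficient of T^m in \sum_{n in S} T^{n_1+...+n_d}, S a set of
    nonnegative integer vectors: the number of n in S with |n| = m. *)
Definition gcoeff (d : nat) (S : ('I_d -> nat) -> Prop) (m : nat) : nat :=
  #|[set n : {ffun 'I_d -> 'I_m.+1} |
      ((\sum_(i < d) (n i : nat))%N == m) && `[< S (fun i => nat_of_ord (n i)) >]]|.

(** Nice basis: R^*_L(T) = \sum_{n in D_B^*} T^{|n|}, where R is the
    coefficient sequence of R^*_L(T). *)
Definition nice (d : nat) (c : 'I_d -> 'I_d -> 'I_d -> PS) (star : kind)
  (Rcoef : nat -> int) : Prop :=
  forall m, Rcoef m = (gcoeff (D_B c star) m)%:Z.

Definition C_B (d : nat) (c : 'I_d -> 'I_d -> 'I_d -> PS) (star : kind)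
  (y : 'I_d -> Rdefinitions.R) : Prop :=
  (forall k, 0 <= y k) /\
  forall i j l a, bracket_is c i j l a -> a <> ps0 ->
    match star with
    | Ideal => (y l <= y i) && (y l <= y j)
    | Subalg => y l <= y i + y j
    end.

(* Main.v *)
Require Import Defs.
From mathcomp Require Import all_boot all_order all_algebra.
From mathcomp Require Import Rstruct.
From mathcomp Require Import complex boolp zify.
Import Order.TTheory GRing.Theory Num.Theory.
Set Implicit Arguments. Unset Strict Implicit.
Local Open Scope ring_scope.

Arguments mulps : simpl never.
Arguments tpow : simpl never.
Arguments ps0 : simpl never.

Definition vge (f : PS) (n : nat) : Prop := forall m, (m < n)%N -> f m = 0.

Lemma vge_le f p q : vge f p -> (q <= p)%N -> vge f q.
Proof. move=> H le m lt; apply: H; exact: leq_trans lt le. Qed.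

Lemma vge0 f : vge f 0.
Proof. by move=> m; rewrite ltn0. Qed.

Lemma vge_tpow p : vge (tpow p) p.
Proof. move=> m lt; rewrite /tpow ifN //; by apply/eqP => e; rewrite e ltnn in lt. Qed.

Lemma vge_mul f g p q : vge f p -> vge g q -> vge (mulps f g) (p + q).
Proof.
move=> Hf Hg m lt; rewrite /mulps; apply: big1 => k _.
case: (ltnP k p) => kp; first by rewrite Hf // mul0r.
rewrite Hg ?mulr0 //. have := ltn_ord k. lia.
Qed.

Lemma mul_lead f g p q : vge f p -> vge g q -> mulps f g (p + q)%N = f p * g q.
Proof.
move=> Hf Hg; rewrite /mulps.
have hp : (p < (p+q).+1)%N by lia.
rewrite (bigD1 (Ordinal hp)) //= addKn big1 ?addr0 // => k hk.
have hk' : (k : nat) != p.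
  apply: contra hk => /eqP e; apply/eqP/val_inj => /=; exact: e.
case: (ltnP k p) => kp; first by rewrite Hf // mul0r.
rewrite Hg ?mulr0 //. have := ltn_ord k. move: hk'. move/eqP. lia.
Qed.

Lemma span_eq f n : vge f n -> f = mulps (fun k => f (k + n)%N) (tpow n).
Proof.
move=> H; apply: funext => m; rewrite /mulps.
case: (ltnP m n) => mn.
  rewrite H // big1 // => k _; rewrite /tpow ifN ?mulr0 //. apply/eqP; have := ltn_ord k; lia.
have hk : (m - n < m.+1)%N by lia.
rewrite (bigD1 (Ordinal hk)) //= big1 ?addr0.
  by rewrite /tpow subKn // eqxx mulr1 subnK.
move=> k hk'; rewrite /tpow ifN ?mulr0 //. apply: contra hk' => /eqP e; apply/eqP/val_inj => /=. have := ltn_ord k; lia.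
Qed.

Lemma in_spanP d (n : 'I_d -> nat) v : in_span n v <-> forall k, vge (v k) (n k).
Proof.
split.
  case=> a -> k. rewrite -[n k]add0n. apply: vge_mul; [exact: vge0 | exact: vge_tpow].
move=> H; exists (fun k m => v k (m + n k)%N); apply: funext => k; exact: span_eq (H k).
Qed.

Lemma mul0ps f : mulps ps0 f = ps0.
Proof. apply: funext => m; rewrite /mulps big1 // => k _; by rewrite mul0r. Qed.

Lemma mulps0 f : mulps f ps0 = ps0.
Proof. apply: funext => m; rewrite /mulps big1 // => k _; by rewrite mulr0. Qed.

Lemma simple_cases d (c : 'I_d -> 'I_d -> 'I_d -> PS) (hs : simple_basis c) i j l :
  c i j l = ps0 \/ (bracket_is c i j l (c i j l) /\ val_is_zero (c i j l)).
Proof.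
have [l' [a' [hb ha]]] := hs i j.
case: (eqVneq l l') => [e|ne]; last by left; rewrite hb ifN.
subst l'. case: ha => [e|ha]; first by left; rewrite hb eqxx e.
right; rewrite hb eqxx; split => // k; rewrite hb //.
Qed.

Lemma simple_unit d (c : 'I_d -> 'I_d -> 'I_d -> PS) (hs : simple_basis c) i j l a :
  bracket_is c i j l a -> a <> ps0 -> val_is_zero a.
Proof.
move=> hb ha; have := hb l; rewrite eqxx => e.
case: (simple_cases hs i j l); rewrite e //; by case.
Qed.

Lemma val_nz (a : PS) : val_is_zero a -> a <> ps0.
Proof. by move=> h e; apply: h; rewrite e. Qed.

Definition tv d (i : 'I_d) (p : nat) : Lvec d := fun k => if k == i then tpow p else ps0.

Lemma tv_span d (n : 'I_d -> nat) i : in_span n (tv i (n i)).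
Proof.
apply/in_spanP => k; rewrite /tv /=; case: eqP => [->|_]; first exact: vge_tpow.
by move=> m _.
Qed.

Lemma br_tv d (c : 'I_d -> 'I_d -> 'I_d -> PS) i j p q l :
  br c (tv i p) (tv j q) l = mulps (mulps (tpow p) (tpow q)) (c i j l).
Proof.
apply: funext => m; rewrite /br; cbv beta; rewrite (bigD1 i) //= addrC big1 => [|i' ne]; last first.
  apply: big1 => j' _; rewrite /tv; cbv beta; by rewrite (negbTE ne) !mul0ps.
rewrite add0r (bigD1 j) //= addrC big1 => [|j' ne]; last first.
  rewrite /tv; cbv beta; by rewrite (negbTE ne) mulps0 mul0ps.
by rewrite add0r /tv !eqxx.
Qed.

Lemma key p q (a : PS) : mulps (mulps (tpow p) (tpow q)) a (p + q)%N = a 0%N.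
Proof.
rewrite -[(p+q)%N]addn0 (mul_lead (vge_mul (@vge_tpow p) (@vge_tpow q)) (@vge0 a)).
by rewrite (mul_lead (@vge_tpow p) (@vge_tpow q)) /tpow !eqxx !mul1r.
Qed.

Lemma test_le d (c : 'I_d -> 'I_d -> 'I_d -> PS) (n : 'I_d -> nat) i j l p q :
  in_span n (br c (tv i p) (tv j q)) -> val_is_zero (c i j l) -> (n l <= p + q)%N.
Proof.
move=> /in_spanP H hv; rewrite leqNgt; apply/negP => lt.
apply: hv; have := H l (p + q)%N lt; by rewrite br_tv key.
Qed.

Lemma equiv d (c : 'I_d -> 'I_d -> 'I_d -> PS) star (n : 'I_d -> nat) :
  is_lie c -> simple_basis c ->
  D_B c star n <-> C_B c star (fun k => (n k)%:R).
Proof.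
move=> [_ hanti _] hs; split.
- move=> hD; split => [k|i j l a hb ha]; first exact: ler0n.
  have hu := simple_unit hs hb ha.
  have cl : c i j l = a by rewrite hb eqxx.
  case: star hD => hD.
    have h : (n l <= n i + n j)%N.
      apply: (test_le (c:=c) (i:=i) (j:=j) (l:=l)); last by rewrite cl.
      apply: hD; exact: tv_span.
    have r : ((n l)%:R <= (n i)%:R + (n j)%:R :> Rdefinitions.R) by rewrite -natrD ler_nat.
    exact: r.
  have h1 : (n l <= 0 + n i)%N.
    apply: (test_le (c:=c) (i:=j) (j:=i) (l:=l)); first by apply: hD; exact: tv_span.
    rewrite hanti cl /val_is_zero /oppps; move=> /eqP; rewrite oppr_eq0; apply/negP; exact/eqP.
  have h2 : (n l <= 0 + n j)%N.
    apply: (test_le (c:=c) (i:=i) (j:=j) (l:=l)); first by apply: hD; exact: tv_span.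
    by rewrite cl.
  rewrite add0n in h1; rewrite add0n in h2.
  have r1 : ((n l)%:R <= (n i)%:R :> Rdefinitions.R) by rewrite ler_nat.
  have r2 : ((n l)%:R <= (n j)%:R :> Rdefinitions.R) by rewrite ler_nat.
  apply/andP; split; [exact: r1 | exact: r2].
- move=> [_ hC]; case: star hC => hC /=.
    move=> v w /in_spanP hv /in_spanP hw; apply/in_spanP => l m lt.
    apply: big1 => i _; apply: big1 => j _.
    case: (simple_cases hs i j l) => [->|[hb hnz]]; first by rewrite mulps0.
    have hle := hC i j l _ hb (val_nz hnz).
    have {}hle : (n l <= n i + n j)%N.
      by rewrite -(ler_nat Rdefinitions.R) natrD; exact: hle.
    have hv' : vge (mulps (mulps (v i) (w j)) (c i j l)) (n l).
      apply: vge_le; first exact: (vge_mul (vge_mul (hv i) (hw j)) (@vge0 _)).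
      by rewrite addn0.
    exact: hv' m lt.
  move=> v w /in_spanP hw; apply/in_spanP => l m lt.
  apply: big1 => i _; apply: big1 => j _.
  case: (simple_cases hs i j l) => [->|[hb hnz]]; first by rewrite mulps0.
  have := hC i j l _ hb (val_nz hnz).
  move=> /andP [_ hle0].
  have hle : (n l <= n j)%N by rewrite -(ler_nat Rdefinitions.R); exact: hle0.
  have hv' : vge (mulps (mulps (v i) (w j)) (c i j l)) (n l).
    apply: vge_le; first exact: (vge_mul (vge_mul (@vge0 (v i)) (hw j)) (@vge0 _)).
    by rewrite addn0 add0n.
  exact: hv' m lt.
Qed.

Theorem proposition4p1 (d : nat) (c : 'I_d -> 'I_d -> 'I_d -> PS) (star : kind)
  (Rcoef : nat -> int) :
  is_lie c -> simple_basis c -> nice c star Rcoef ->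
  forall m : nat,
    Rcoef m = (gcoeff (fun n : 'I_d -> nat => C_B c star (fun k => (n k)%:R)) m)%:Z.
Proof.
move=> hl hs hn m.
have E : D_B c star = (fun n : 'I_d -> nat => C_B c star (fun k => (n k)%:R)).
  apply: funext => n; apply: propext; exact: equiv.
rewrite -E; exact: hn.
Qed.
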